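(* (i) For every $k\ge2$, $\alpha\in(1,2)$, $p\in(0,1)$ there exists $C^{\alpha,p}_{5,k}>0$ such that for all $n\in\mathbb{N}$ and $t\in\mathbb{R}$, $\big|\frac{\mathrm{d}R^{\alpha,p}_{n,1,k}(t)}{\mathrm{d}t}\big|\le C^{\alpha,p}_{5,k}|t|^{k-1}/n^{(k-\alpha)/\alpha}$. (ii) Let $\alpha\in(1,2)$, $p\in(0,1)$, and let $C_2>0$ be a constant such that $|x_n^{\alpha,p}(t)|/n\le\frac12$ for all $n\in\mathbb{N}$ and $|t|\le C_2n^{1/\alpha}$. Then there exists $C_5^{\alpha,p}>0$ such that for all $n\in\mathbb{N}$ and $|t|\le C_2n^{1/\alpha}$, $\big|\frac{\mathrm{d}x_n^{\alpha,p}(t)}{\mathrm{d}t}\big|\le C_5^{\alpha,p}n^{(\alpha-1)/\alpha}$.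
   Context: Let $p\in(0,1)$, $q=1-p$, $r=1/q$, $\alpha\in(1,2)$. Let $\mathbf{f}_{\alpha,p}(t)=\sum_{k\ge1}e^{\mathrm{i}tr^{k/\alpha}}q^{k-1}p$ and $x_n^{\alpha,p}(t)=n(\mathbf{f}_{\alpha,p}(t/n^{1/\alpha})-1)$ (differentiable since $\alpha>1$; a constant $C_2$ as in (ii) exists). Let $\gamma_n=n/r^{\lceil\log_rn\rceil}$ and for $k\ge2$ \[R^{\alpha,p}_{n,1,k}(t)=-\sum_{m=\lceil\log_rn\rceil}^\infty\Big(\exp\Big\{\frac{\mathrm{i}t}{r^{m/\alpha}\gamma_n^{1/\alpha}}\Big\}-\sum_{j=0}^{k-1}\frac{(\mathrm{i}t)^j}{j!\,r^{jm/\alpha}\gamma_n^{j/\alpha}}\Big)\frac{p\gamma_n}{q}r^m,\] which is differentiable in $t$. *)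

(* Defs.v *)
From Stdlib Require Import Reals ZArith.
From Coquelicot Require Import Coquelicot.
Open Scope R_scope.

Definition Cexpi (theta : R) : C := (cos theta, sin theta).

(* Sum of a complex series, taken componentwise (Coquelicot's Series is real-valued). *)
Definition CSeries (a : nat -> C) : C :=
  (Series (fun k => Re (a k)), Series (fun k => Im (a k))).

Definition Rceil (x : R) : Z := (- Int_part (- x))%Z.

(* f_{alpha,p}(t) = sum_{k>=1} e^{i t r^{k/alpha}} q^{k-1} p,  q = 1-p, r = 1/q;
   reindexed with k = j+1, j >= 0 *)
Definition f_ap (alpha p t : R) : C :=
  let q := 1 - p in let r := 1 / q in
  CSeries (fun j => (Cexpi (t * Rpower r (INR (S j) / alpha)) * RtoC (q ^ j * p))%C).

Definition x_n (alpha p : R) (n : nat) (t : R) : C :=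
  (RtoC (INR n) * (f_ap alpha p (t / Rpower (INR n) (1 / alpha)) - 1))%C.

(* m0 = ceil(log_r n), as a natural number (nonnegative for n >= 1) *)
Definition m0 (p : R) (n : nat) : nat :=
  let r := 1 / (1 - p) in Z.to_nat (Rceil (ln (INR n) / ln r)).

Definition gamma_n (p : R) (n : nat) : R :=
  let r := 1 / (1 - p) in INR n / r ^ (m0 p n).

Definition R_n1k (alpha p : R) (n k : nat) (t : R) : C :=
  let q := 1 - p in let r := 1 / q in let g := gamma_n p n in
  (- CSeries (fun i =>
      let m := (m0 p n + i)%nat in
      ((Cexpi (t / (Rpower r (INR m / alpha) * Rpower g (1 / alpha)))
        - sum_n (G := C_AbelianMonoid) (fun j =>
             (pow_n (K := C_Ring) (Ci * RtoC t) j
              / RtoC (INR (fact j) * Rpower r (INR j * INR m / alpha)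
                       * Rpower g (INR j / alpha)))%C) (k - 1))
       * RtoC (p * g / q * r ^ m))%C))%C.

(* Main.v *)
Require Import Defs.
From Stdlib Require Import Reals ZArith.
From Coquelicot Require Import Coquelicot.
Open Scope R_scope.
From Stdlib Require Import Lra Lia.

Lemma is_derive_pair (f g : R -> R) x a b :
  is_derive f x a -> is_derive g x b ->
  is_derive (fun y => ((f y, g y) : C)) x ((a, b) : C).
Proof.
  intros Hf Hg. unfold is_derive in *.
  eapply filterdiff_ext_lin.
  - apply (filterdiff_comp_2 f g (fun u v => (u, v)) _ _ (fun u v => (u, v)) Hf Hg).
    eapply filterdiff_ext_lin.
    eapply filterdiff_ext. 2: apply filterdiff_id.
    all: intros u; simpl; try reflexivity; destruct u; reflexivity.
Qed.

Lemma is_derive_fst (f : R -> C) x l :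
  is_derive f x l -> is_derive (fun y => fst (f y)) x (fst l).
Proof.
  intros H. unfold is_derive in *.
  eapply filterdiff_ext_lin.
  - apply (filterdiff_comp f (fun z : C => fst z) _ (fun z : C => fst z) H).
    apply filterdiff_linear. apply is_linear_fst.
  - intros y. reflexivity.
Qed.

Lemma is_derive_snd (f : R -> C) x l :
  is_derive f x l -> is_derive (fun y => snd (f y)) x (snd l).
Proof.
  intros H. unfold is_derive in *.
  eapply filterdiff_ext_lin.
  - apply (filterdiff_comp f (fun z : C => snd z) _ (fun z : C => snd z) H).
    apply filterdiff_linear. apply is_linear_snd.
  - intros y. reflexivity.
Qed.

Lemma series_Un_cv (a : nat -> R) : ex_series a -> Un_cv (sum_f_R0 a) (Series a).
Proof.
  intros H. apply Series_correct in H. apply is_series_Reals in H. exact H.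
Qed.

Lemma sum_f_R0_derive (a a' : nat -> R -> R) n x :
  (forall n y, is_derive (a n) y (a' n y)) ->
  derivable_pt_lim (SP a n) x (SP a' n x).
Proof.
  intros H. apply is_derive_Reals. unfold SP.
  induction n as [|n IH]; simpl.
  - apply H.
  - apply (is_derive_plus (fun y => sum_f_R0 (fun k => a k y) n) (a (S n))); auto.
Qed.

Lemma series_derive (a a' : nat -> R -> R) t :
  (forall n y, is_derive (a n) y (a' n y)) ->
  (forall y, ex_series (fun n => a n y)) ->
  (forall Rr, 0 < Rr -> exists M : nat -> R, ex_series M /\
      forall n y, Rabs y < Rr -> Rabs (a' n y) <= M n) ->
  is_derive (fun y => Series (fun n => a n y)) t (Series (fun n => a' n t)).
Proof.
  intros Hd Hc Hb.
  assert (Hr : 0 < Rabs t + 1) by (pose proof (Rabs_pos t); lra).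
  set (r := mkposreal _ Hr).
  destruct (Hb (Rabs t + 1) Hr) as [M [[l Hl] HM]].
  assert (HM0 : forall n, 0 <= M n).
  { intros n. eapply Rle_trans. apply Rabs_pos. apply (HM n 0). rewrite Rabs_R0; lra. }
  assert (X : CVN_r a' r).
  { exists M. exists l. split.
    - apply is_series_Reals in Hl. unfold infinite_sum in Hl.
      intros eps He. destruct (Hl eps He) as [N HN]. exists N. intros n Hn.
      rewrite (sum_eq _ M). apply HN; auto. intros i _. apply Rabs_pos_eq, HM0.
    - intros n y Hy. apply HM. unfold Boule in Hy. simpl in Hy.
      rewrite Rminus_0_r in Hy. exact Hy. }
  destruct (CVN_CVU_r a' r X t) as [e He]. { simpl; lra. }
  apply is_derive_Reals.
  apply (CVU_derivable (SP a) (SP a') (fun y => Series (fun n => a n y))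
           (fun y => Series (fun n => a' n y)) t e He).
  - intros y _. apply series_Un_cv, Hc.
  - intros n y _. apply sum_f_R0_derive; auto.
  - unfold Boule. rewrite Rminus_diag, Rabs_R0. apply cond_pos.
Qed.

Lemma im_le_Cmod' (c : C) : Rabs (snd c) <= Cmod c.
Proof. eapply Rle_trans; [apply Rmax_r| apply Rmax_Cmod]. Qed.

Lemma Cseries_derive (b b' : nat -> R -> C) t :
 (forall n y, is_derive (b n) y (b' n y)) ->
 (forall y, exists M : nat -> R, ex_series M /\ forall n, Cmod (b n y) <= M n) ->
 (forall Rr, 0 < Rr -> exists M : nat -> R, ex_series M /\ forall n y, Rabs y < Rr -> Cmod (b' n y) <= M n) ->
 is_derive (fun y => CSeries (fun n => b n y)) t (CSeries (fun n => b' n t)).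
Proof.
  intros Hd Hc Hb. unfold CSeries.
  apply is_derive_pair.
  - apply (series_derive (fun n y => Re (b n y)) (fun n y => Re (b' n y))).
    + intros n y. apply (is_derive_fst (b n)), Hd.
    + intros y. destruct (Hc y) as [M [HM HMb]].
      apply (@ex_series_le R_AbsRing R_CompleteNormedModule _ M); auto. intros n. eapply Rle_trans. apply re_le_Cmod. apply HMb.
    + intros Rr HR. destruct (Hb Rr HR) as [M [HM HMb]]. exists M; split; auto.
      intros n y Hy. eapply Rle_trans. apply re_le_Cmod. apply HMb; auto.
  - apply (series_derive (fun n y => Im (b n y)) (fun n y => Im (b' n y))).
    + intros n y. apply (is_derive_snd (b n)), Hd.
    + intros y. destruct (Hc y) as [M [HM HMb]].
      apply (@ex_series_le R_AbsRing R_CompleteNormedModule _ M); auto. intros n. eapply Rle_trans. apply im_le_Cmod'. apply HMb.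
    + intros Rr HR. destruct (Hb Rr HR) as [M [HM HMb]]. exists M; split; auto.
      intros n y Hy. eapply Rle_trans. apply im_le_Cmod'. apply HMb; auto.
Qed.

Lemma sqrt2_le_2 : sqrt 2 <= 2.
Proof.
  rewrite <- (sqrt_pow2 2) at 2 by lra. apply sqrt_le_1_alt. lra.
Qed.

Lemma Series_comp_bound (a : nat -> R) (M : nat -> R) :
  ex_series M -> (forall n, Rabs (a n) <= M n) -> Rabs (Series a) <= Series M.
Proof.
  intros HM Hb.
  assert (Ha : ex_series (fun n => Rabs (a n))).
  { apply (@ex_series_le R_AbsRing R_CompleteNormedModule _ M); auto. intros n. change (norm (Rabs (a n))) with (Rabs (Rabs (a n))).
    rewrite Rabs_Rabsolu. auto. }
  eapply Rle_trans. apply Series_Rabs; auto.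
  apply Series_le; auto. intros n; split; [apply Rabs_pos| auto].
Qed.

Lemma CSeries_bound (b : nat -> C) M :
  ex_series M -> (forall n, Cmod (b n) <= M n) -> Cmod (CSeries b) <= 2 * Series M.
Proof.
  intros HM Hb.
  assert (H1 : Rabs (fst (CSeries b)) <= Series M).
  { unfold CSeries; simpl. apply Series_comp_bound; auto.
    intros n. eapply Rle_trans. apply re_le_Cmod. auto. }
  assert (H2 : Rabs (snd (CSeries b)) <= Series M).
  { unfold CSeries; simpl. apply Series_comp_bound; auto.
    intros n. eapply Rle_trans. apply im_le_Cmod'. auto. }
  eapply Rle_trans. apply Cmod_2Rmax.
  assert (H0 : 0 <= Series M) by (eapply Rle_trans; [apply Rabs_pos|apply H1]).
  apply Rmult_le_compat; [apply sqrt_pos| apply Rmax_case; apply Rabs_pos | apply sqrt2_le_2|].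
  apply Rmax_lub; auto.
Qed.

Definition CiP (j : nat) : C := pow_n (K := C_Ring) Ci j.
Definition Ti (j : nat) (x : R) : C :=
  (x ^ j / INR (fact j) * fst (CiP j), x ^ j / INR (fact j) * snd (CiP j)).
Fixpoint G (k : nat) (x : R) : C :=
  match k with
  | O => Cexpi x
  | S k => (fst (G k x) - fst (Ti k x), snd (G k x) - snd (Ti k x))
  end.
Definition rot (z : C) : C := (- snd z, fst z).

Lemma CiP_S j : fst (CiP (S j)) = - snd (CiP j) /\ snd (CiP (S j)) = fst (CiP j).
Proof.
  unfold CiP. simpl. destruct (pow_n Ci j) as [a b]. simpl. unfold Cmult; simpl. split; ring.
Qed.

Lemma CiP_0 : CiP 0 = (1, 0).
Proof. reflexivity. Qed.

Lemma deriv_pw k c x :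
  is_derive (fun y => y ^ (S k) / INR (fact (S k)) * c) x (x ^ k / INR (fact k) * c).
Proof.
  auto_derive; auto.
  replace (match k with 0%nat => 1 | S _ => INR k + 1 end) with (INR (S k)) by (destruct k; reflexivity).
  change (fact k + k * fact k)%nat with (fact (S k)).
  rewrite fact_simpl, mult_INR.
  field. split. apply INR_fact_neq_0. rewrite S_INR. pose proof (pos_INR k). lra.
Qed.

Lemma G_derive k x : is_derive (G (S k)) x (rot (G k x)).
Proof.
  revert x. induction k as [|k IH]; intros x.
  { eapply is_derive_ext.
    { intros y. symmetry. instantiate (1 := fun y => (cos y - 1, sin y - 0)).
      simpl. apply injective_projections; simpl; lra. }
    apply is_derive_pair; auto_derive; auto.
    all: simpl; unfold Cexpi; simpl; lra. }
  change (G (S (S k))) with (fun y => (fst (G (S k) y) - fst (Ti (S k) y), snd (G (S k) y) - snd (Ti (S k) y))).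
  destruct (CiP_S k) as [E1 E2].
  assert (R1 : fst (rot (G (S k) x)) = fst (rot (G k x)) - x ^ k / INR (fact k) * fst (CiP (S k))).
  { cbn [rot fst snd G]. rewrite E1. unfold Ti; cbn [fst snd]. ring. }
  assert (R2 : snd (rot (G (S k) x)) = snd (rot (G k x)) - x ^ k / INR (fact k) * snd (CiP (S k))).
  { cbn [rot fst snd G]. rewrite E2. unfold Ti; cbn [fst snd]. ring. }
  replace (rot (G (S k) x)) with ((fst (rot (G (S k) x)), snd (rot (G (S k) x))) : C) by (destruct (rot (G (S k) x)); reflexivity).
  rewrite R1, R2.
  apply is_derive_pair.
  { apply (is_derive_minus (fun y => fst (G (S k) y))).
    { apply (is_derive_fst (G (S k))). apply IH. }
    unfold Ti. apply deriv_pw. }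
  apply (is_derive_minus (fun y => snd (G (S k) y))).
  { apply (is_derive_snd (G (S k))). apply IH. }
  unfold Ti. apply deriv_pw.
Qed.

Lemma G_zero k : fst (G (S k) 0) = 0 /\ snd (G (S k) 0) = 0.
Proof.
  induction k as [|k [IH1 IH2]].
  { cbn [G fst snd]. unfold Cexpi, Ti. rewrite CiP_0. cbn [fst snd]. rewrite cos_0, sin_0. simpl. split; unfold Rdiv; rewrite Rinv_1; ring. }
  cbn [G fst snd]. cbn [G fst snd] in IH1, IH2. rewrite IH1, IH2. unfold Ti. cbn [fst snd pow].
  split; unfold Rdiv; rewrite !Rmult_0_l; lra.
Qed.

Lemma mvt_bound (f df : R -> R) x B : (forall y, is_derive f y (df y)) -> f 0 = 0 ->
  (forall y, Rabs y <= Rabs x -> Rabs (df y) <= B) -> Rabs (f x) <= B * Rabs x.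
Proof.
  intros Hd H0 Hb.
  destruct (MVT_cor4 f df 0 (Rabs x)) with (b := x) as [c [Hc1 Hc2]].
  { intros; apply Hd. }
  { rewrite Rminus_0_r; lra. }
  rewrite H0 in Hc1. rewrite !Rminus_0_r in Hc1, Hc2.
  replace (f x) with (df c * x) by lra. rewrite Rabs_mult.
  apply Rmult_le_compat_r. apply Rabs_pos. apply Hb. exact Hc2.
Qed.

Lemma G_bound k x : Rabs (fst (G k x)) + Rabs (snd (G k x)) <= 2 ^ (S k) * Rabs x ^ k.
Proof.
  revert x. induction k as [|k IH]; intros x.
  { cbn [G fst snd]. unfold Cexpi; cbn [fst snd].
    pose proof (COS_bound x). pose proof (SIN_bound x).
    assert (Rabs (cos x) <= 1) by (apply Rabs_le; lra).
    assert (Rabs (sin x) <= 1) by (apply Rabs_le; lra). simpl. lra. }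
  destruct (G_zero k) as [Z1 Z2].
  assert (B1 : Rabs (fst (G (S k) x)) <= 2 ^ (S k) * Rabs x ^ k * Rabs x).
  { apply (mvt_bound (fun y => fst (G (S k) y)) (fun y => fst (rot (G k y)))); auto.
    { intros y. apply (is_derive_fst (G (S k))), G_derive. }
    intros y Hy. unfold rot; cbn [fst snd]. rewrite Rabs_Ropp.
    eapply Rle_trans. 2: apply Rmult_le_compat_l. 3: apply pow_incr; split; [apply Rabs_pos|exact Hy].
    { specialize (IH y). pose proof (Rabs_pos (fst (G k y))). lra. }
    apply pow_le; lra. }
  assert (B2 : Rabs (snd (G (S k) x)) <= 2 ^ (S k) * Rabs x ^ k * Rabs x).
  { apply (mvt_bound (fun y => snd (G (S k) y)) (fun y => snd (rot (G k y)))); auto.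
    { intros y. apply (is_derive_snd (G (S k))), G_derive. }
    intros y Hy. unfold rot; cbn [fst snd].
    eapply Rle_trans. 2: apply Rmult_le_compat_l. 3: apply pow_incr; split; [apply Rabs_pos|exact Hy].
    { specialize (IH y). pose proof (Rabs_pos (snd (G k y))). lra. }
    apply pow_le; lra. }
  replace (2 ^ S (S k) * Rabs x ^ S k) with (2 * (2 ^ (S k) * Rabs x ^ k * Rabs x)) by (simpl; ring).
  lra.
Qed.

Lemma Rpower_pos x y : 0 < Rpower x y.
Proof. unfold Rpower. apply exp_pos. Qed.

Lemma Rpower_pow_gen x a j : 0 < x -> Rpower x a ^ j = Rpower x (INR j * a).
Proof.
  intros Hx. rewrite <- Rpower_pow by apply Rpower_pos. rewrite Rpower_mult. f_equal; ring.
Qed.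

Lemma Den_eq r g a m j : 0 < r -> 0 < g ->
  Rpower r (INR j * INR m / a) * Rpower g (INR j / a) = (Rpower r (INR m / a) * Rpower g (1 / a)) ^ j.
Proof.
  intros Hr Hg. rewrite Rpow_mult_distr, !Rpower_pow_gen by auto. f_equal; f_equal; unfold Rdiv; ring.
Qed.

Lemma pow_Cit t j : pow_n (K := C_Ring) (Ci * RtoC t)%C j = (t ^ j * fst (CiP j), t ^ j * snd (CiP j)).
Proof.
  induction j as [|j IH].
  { simpl. unfold one; simpl. apply injective_projections; simpl; ring. }
  change (pow_n (K := C_Ring) (Ci * RtoC t)%C (S j)) with (Cmult (Ci * RtoC t)%C (pow_n (K := C_Ring) (Ci * RtoC t)%C j)).
  rewrite IH. destruct (CiP_S j) as [E1 E2]. rewrite E1, E2.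
  unfold Cmult; simpl. apply injective_projections; simpl; ring.
Qed.

Lemma pow_term t D j : D <> 0 ->
  (pow_n (K := C_Ring) (Ci * RtoC t)%C j / RtoC D)%C = (t ^ j / D * fst (CiP j), t ^ j / D * snd (CiP j)).
Proof.
  intros HD. rewrite pow_Cit. unfold Cdiv, Cinv, Cmult, RtoC; simpl.
  apply injective_projections; simpl; field; auto.
Qed.

Lemma Ti_eq t W j : W <> 0 ->
  Ti j (t / W) = (t ^ j / (INR (fact j) * W ^ j) * fst (CiP j), t ^ j / (INR (fact j) * W ^ j) * snd (CiP j)).
Proof.
  intros HW. unfold Ti. unfold Rdiv. rewrite Rpow_mult_distr, pow_inv.
  pose proof (INR_fact_neq_0 j). pose proof (pow_nonzero W j HW).
  apply injective_projections; simpl; field; auto.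
Qed.

Lemma G_sum k x : G (S k) x = Cminus (Cexpi x) (sum_n (G := C_AbelianMonoid) (fun j => Ti j x) k).
Proof.
  induction k as [|k IH].
  { rewrite sum_O. cbn [G]. unfold Cminus, Cplus, Copp. apply injective_projections; simpl; ring. }
  rewrite sum_Sn. change (G (S (S k)) x) with ((fst (G (S k) x) - fst (Ti (S k) x), snd (G (S k) x) - snd (Ti (S k) x)) : C).
  rewrite IH. unfold Cminus, Cplus, Copp. simpl. apply injective_projections; simpl; ring.
Qed.

Lemma Cmod_le_sum (z : C) : Cmod z <= Rabs (fst z) + Rabs (snd z).
Proof.
  unfold Cmod. rewrite <- (sqrt_pow2 (Rabs (fst z) + Rabs (snd z))) by (pose proof (Rabs_pos (fst z)); pose proof (Rabs_pos (snd z)); lra).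
  apply sqrt_le_1_alt.
  pose proof (Rabs_pos (fst z)); pose proof (Rabs_pos (snd z)).
  rewrite <- (pow2_abs (fst z)), <- (pow2_abs (snd z)). nra.
Qed.

Lemma term_eq alpha p n k' i t : 0 < p < 1 -> (1 <= n)%nat ->
  let q := 1 - p in let r := 1 / q in let g := gamma_n p n in
  let m := (m0 p n + i)%nat in
  let W := Rpower r (INR m / alpha) * Rpower g (1 / alpha) in
  let c := p * g / q * r ^ m in
  ((Cexpi (t / (Rpower r (INR m / alpha) * Rpower g (1 / alpha)))
        - sum_n (G := C_AbelianMonoid) (fun j =>
             (pow_n (K := C_Ring) (Ci * RtoC t) j
              / RtoC (INR (fact j) * Rpower r (INR j * INR m / alpha)
                       * Rpower g (INR j / alpha)))%C) k')
       * RtoC (p * g / q * r ^ m))%C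
  = ((fst (G (S k') (t / W)) * c, snd (G (S k') (t / W)) * c) : C).
Proof.
  intros Hp Hn q r g m W c.
  assert (Hr : 0 < r) by (unfold r, q; apply Rdiv_lt_0_compat; lra).
  assert (Hg : 0 < g).
  { unfold g, gamma_n. apply Rdiv_lt_0_compat. apply lt_0_INR; lia. apply pow_lt. fold q r. exact Hr. }
  assert (HW : 0 < W) by (apply Rmult_lt_0_compat; apply Rpower_pos).
  rewrite G_sum.
  rewrite (sum_n_ext _ (fun j => Ti j (t / W))).
  2: { intros j. rewrite Rmult_assoc, Den_eq by auto. fold W.
       rewrite pow_term. 2: { apply Rmult_integral_contrapositive; split. apply INR_fact_neq_0. apply pow_nonzero; lra. }
       rewrite Ti_eq by lra. reflexivity. }
  fold W c. unfold Cmult, RtoC. simpl. apply injective_projections; simpl; ring.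
Qed.

Lemma deriv_comp_lin (f df : R -> R) W c t : (forall y, is_derive f y (df y)) -> W <> 0 ->
  is_derive (fun y => f (y / W) * c) t (df (t / W) / W * c).
Proof.
  intros Hd HW.
  apply (is_derive_ext (fun y => scal c (f (y / W)))).
  { intros y. unfold scal; simpl; unfold mult; simpl. ring. }
  replace (df (t / W) / W * c) with (scal c (scal (/ W) (df (t / W)))).
  2: { unfold scal; simpl; unfold mult; simpl. field. auto. }
  apply is_derive_scal. apply (is_derive_comp f (fun y => y / W)). apply Hd.
  auto_derive; auto. field; auto.
Qed.

Lemma cW_eq p q alpha g r m k : 0 < r -> 0 < g -> q <> 0 ->
  (p * g / q * r ^ m) / (Rpower r (INR m / alpha) * Rpower g (1 / alpha)) ^ k
  = p / q * Rpower g (1 - INR k / alpha) * Rpower r (1 - INR k / alpha) ^ m.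
Proof.
  intros Hr Hg Hq.
  rewrite Rpow_mult_distr, !Rpower_pow_gen by auto.
  rewrite <- (Rpower_pow m r) by auto.
  replace (1 - INR k / alpha) with (1 + - (INR k * (1 / alpha))) by (unfold Rdiv; ring).
  replace (INR m * (1 + - (INR k * (1 / alpha)))) with (INR m + - (INR k * (INR m / alpha))) by (unfold Rdiv; ring).
  rewrite !Rpower_plus, !Rpower_Ropp, Rpower_1 by auto.
  pose proof (Rpower_pos r (INR k * (INR m / alpha))). pose proof (Rpower_pos g (INR k * (1 / alpha))).
  field. split; lra.
Qed.

Lemma geom_series A rho : 0 <= rho < 1 ->
  ex_series (fun i => A * rho ^ i) /\ Series (fun i => A * rho ^ i) = A / (1 - rho).
Proof.
  intros Hr. assert (H1 : Rabs rho < 1) by (rewrite Rabs_pos_eq; lra).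
  split.
  { apply (ex_series_scal_l A (fun i => rho ^ i)). apply ex_series_geom; auto. }
  rewrite Series_scal_l, Series_geom by auto. unfold Rdiv. ring.
Qed.

Lemma pow_div x y n : (x / y) ^ n = x ^ n / y ^ n.
Proof. unfold Rdiv. rewrite Rpow_mult_distr, pow_inv. reflexivity. Qed.

Lemma CSeries_ext (a b : nat -> C) : (forall n, a n = b n) -> CSeries a = CSeries b.
Proof. intros H. unfold CSeries. f_equal; apply Series_ext; intros n; rewrite H; reflexivity. Qed.

Lemma part1 : forall (k : nat) (alpha p : R),
     (2 <= k)%nat -> 1 < alpha < 2 -> 0 < p < 1 ->
     exists C5k : R, 0 < C5k /\
       forall (n : nat) (t : R), (1 <= n)%nat ->
         exists d : C, is_derive (R_n1k alpha p n k) t d /\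
           Cmod d <= C5k * Rabs t ^ (k - 1) / Rpower (INR n) ((INR k - alpha) / alpha).
Proof.
  intros k alpha p Hk Ha Hp.
  set (q := 1 - p). set (r := 1 / q).
  set (e := 1 - INR k / alpha). set (rho := Rpower r e).
  assert (Hq : 0 < q < 1) by (unfold q; lra).
  assert (Hr : 1 < r).
  { unfold r. apply (Rmult_lt_reg_r q); [lra|]. unfold Rdiv. rewrite Rmult_assoc, Rinv_l by lra. lra. }
  assert (He : e < 0).
  { unfold e. assert (2 <= INR k) by (replace 2 with (INR 2) by (simpl; ring); apply le_INR; auto).
    assert (1 < INR k / alpha). { apply (Rmult_lt_reg_r alpha); [lra|]. unfold Rdiv. rewrite Rmult_assoc, Rinv_l by lra. lra. }
    lra. }
  assert (Hrho : 0 < rho < 1).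
  { split. apply Rpower_pos. unfold rho. rewrite <- (Rpower_O r) by lra. apply Rpower_lt; lra. }
  destruct k as [|k']; [lia|].
  exists (2 * (2 ^ (S k') * (p / q) / (1 - rho))). split.
  { apply Rmult_lt_0_compat; [lra|]. apply Rdiv_lt_0_compat; [|lra].
    apply Rmult_lt_0_compat. apply pow_lt; lra. apply Rdiv_lt_0_compat; lra. }
  intros n t Hn.
  set (g := gamma_n p n). set (mm := m0 p n).
  assert (Hg : 0 < g).
  { unfold g, gamma_n. apply Rdiv_lt_0_compat. apply lt_0_INR; lia. apply pow_lt. fold q r. lra. }
  set (W := fun i : nat => Rpower r (INR (mm + i) / alpha) * Rpower g (1 / alpha)).
  set (c := fun i : nat => p * g / q * r ^ (mm + i)).
  assert (HW : forall i, 0 < W i) by (intros; apply Rmult_lt_0_compat; apply Rpower_pos).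
  assert (Hc : forall i, 0 < c i).
  { intros. unfold c. apply Rmult_lt_0_compat. apply Rdiv_lt_0_compat. apply Rmult_lt_0_compat; lra. lra. apply pow_lt; lra. }
  set (L0 := p / q * Rpower g e * rho ^ mm).
  assert (HL0 : 0 < L0).
  { unfold L0. apply Rmult_lt_0_compat. apply Rmult_lt_0_compat. apply Rdiv_lt_0_compat; lra. apply Rpower_pos. apply pow_lt; lra. }
  assert (HL : forall i, c i / W i ^ (S k') = L0 * rho ^ i).
  { intros i. unfold c, W, L0, rho, e. rewrite cW_eq by lra. rewrite pow_add. ring. }
  set (b := fun (i : nat) (y : R) => ((fst (G (S k') (y / W i)) * c i, snd (G (S k') (y / W i)) * c i) : C)).
  set (b' := fun (i : nat) (y : R) => ((fst (rot (G k' (y / W i))) / W i * c i, snd (rot (G k' (y / W i))) / W i * c i) : C)).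
  assert (Hb'd : forall i y, is_derive (b i) y (b' i y)).
  { intros i y. apply is_derive_pair.
    { apply (deriv_comp_lin (fun x => fst (G (S k') x)) (fun x => fst (rot (G k' x)))).
      { intros; apply (is_derive_fst (G (S k'))), G_derive. }
      specialize (HW i); lra. }
    apply (deriv_comp_lin (fun x => snd (G (S k') x)) (fun x => snd (rot (G k' x)))).
    { intros; apply (is_derive_snd (G (S k'))), G_derive. }
    specialize (HW i); lra. }
  assert (Hb'b : forall i y, Cmod (b' i y) <= 2 ^ (S k') * Rabs y ^ k' * (L0 * rho ^ i)).
  { intros i y. eapply Rle_trans. apply Cmod_le_sum. unfold b'; cbn [fst snd].
    pose proof (HW i) as HWi. pose proof (Hc i) as Hci.
    rewrite !Rabs_mult, !Rabs_div by lra. rewrite (Rabs_pos_eq (W i)), (Rabs_pos_eq (c i)) by lra.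
    pose proof (G_bound k' (y / W i)) as GB. unfold rot in *; cbn [fst snd]. rewrite Rabs_Ropp.
    rewrite <- HL. rewrite Rabs_div, (Rabs_pos_eq (W i)), pow_div in GB by lra.
    replace (Rabs (snd (G k' (y / W i))) / W i * c i + Rabs (fst (G k' (y / W i))) / W i * c i)
      with ((Rabs (fst (G k' (y / W i))) + Rabs (snd (G k' (y / W i)))) * (c i / W i)) by (field; lra).
    replace (2 ^ S k' * Rabs y ^ k' * (c i / W i ^ S k')) with ((2 ^ S k' * (Rabs y ^ k' / W i ^ k')) * (c i / W i))
      by (simpl; field; split; [apply pow_nonzero|]; lra).
    apply Rmult_le_compat_r. apply Rdiv_le_0_compat; lra. exact GB. }
  assert (Hbb : forall i y, Cmod (b i y) <= 2 ^ (S (S k')) * Rabs y ^ (S k') * (L0 * rho ^ i)).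
  { intros i y. eapply Rle_trans. apply Cmod_le_sum. unfold b; cbn [fst snd].
    pose proof (HW i) as HWi. pose proof (Hc i) as Hci.
    rewrite !Rabs_mult. rewrite (Rabs_pos_eq (c i)) by lra.
    pose proof (G_bound (S k') (y / W i)) as GB.
    rewrite <- HL. rewrite Rabs_div, (Rabs_pos_eq (W i)), pow_div in GB by lra.
    replace (2 ^ S (S k') * Rabs y ^ S k' * (c i / W i ^ S k')) with ((2 ^ S (S k') * (Rabs y ^ S k' / W i ^ S k')) * c i)
      by (field; apply pow_nonzero; lra).
    rewrite <- Rmult_plus_distr_r.
    apply Rmult_le_compat_r. lra. exact GB. }
  assert (Hrho' : 0 <= rho < 1) by lra.
  assert (Hder : is_derive (fun y => CSeries (fun i => b i y)) t (CSeries (fun i => b' i t))).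
  { apply Cseries_derive; auto.
    { intros y. exists (fun i => (2 ^ (S (S k')) * Rabs y ^ (S k') * L0) * rho ^ i). split.
      { apply geom_series; auto. }
      intros i. rewrite Rmult_assoc. apply Hbb. }
    intros Rr HRr. exists (fun i => (2 ^ (S k') * Rr ^ k' * L0) * rho ^ i). split.
    { apply geom_series; auto. }
    intros i y Hy. eapply Rle_trans. apply Hb'b. rewrite <- Rmult_assoc.
    apply Rmult_le_compat_r. apply pow_le; lra.
    apply Rmult_le_compat_r. lra. apply Rmult_le_compat_l. apply pow_le; lra.
    apply pow_incr. split. apply Rabs_pos. lra. }
  exists (Copp (CSeries (fun i => b' i t))). split.
  { eapply is_derive_ext.
    { intros y. symmetry. instantiate (1 := fun y => opp (CSeries (fun i => b i y))).
      unfold R_n1k. cbv zeta. fold q r g. replace (S k' - 1)%nat with k' by lia.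
      rewrite (CSeries_ext _ (fun i => b i y)).
      { unfold opp; simpl. reflexivity. }
      intros i. exact (term_eq alpha p n k' i y Hp Hn). }
    apply (is_derive_opp (fun y => CSeries (fun i => b i y))). exact Hder. }
  rewrite Cmod_opp.
  assert (HL0e : L0 = p / q / Rpower (INR n) ((INR (S k') - alpha) / alpha)).
  { unfold L0, rho. rewrite Rpower_pow_gen by lra.
    rewrite <- Rpower_mult, Rpower_pow by lra.
    rewrite Rmult_assoc, (Rpower_mult_distr g) by (try apply pow_lt; lra).
    assert (Egr : g * r ^ mm = INR n).
    { unfold g, gamma_n, mm. fold q r. field. apply pow_nonzero; lra. }
    rewrite Egr. replace e with (- ((INR (S k') - alpha) / alpha)) by (unfold e; field; lra).
    rewrite Rpower_Ropp. unfold Rdiv. ring. }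
  replace (S k' - 1)%nat with k' by lia.
  destruct (geom_series (2 ^ (S k') * Rabs t ^ k' * L0) rho Hrho') as [G1 G2].
  eapply Rle_trans. apply (CSeries_bound _ _ G1).
  { intros i. rewrite Rmult_assoc. apply Hb'b. }
  rewrite G2, HL0e. right.
  pose proof (Rpower_pos (INR n) ((INR (S k') - alpha) / alpha)). field. repeat split; lra.
Qed.

Lemma part2 : forall (alpha p C2 : R),
     1 < alpha < 2 -> 0 < p < 1 -> 0 < C2 ->
     (forall (n : nat) (t : R), (1 <= n)%nat ->
        Rabs t <= C2 * Rpower (INR n) (1 / alpha) ->
        Cmod (x_n alpha p n t) / INR n <= 1 / 2) ->
     exists C5 : R, 0 < C5 /\
       forall (n : nat) (t : R), (1 <= n)%nat ->
         Rabs t <= C2 * Rpower (INR n) (1 / alpha) ->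
         exists d : C, is_derive (x_n alpha p n) t d /\
           Cmod d <= C5 * Rpower (INR n) ((alpha - 1) / alpha).
Proof.
  intros alpha p C2 Ha Hp HC2 _.
  set (q := 1 - p). set (r := 1 / q).
  assert (Hq : 0 < q < 1) by (unfold q; lra).
  assert (Hr : 1 < r).
  { unfold r. apply (Rmult_lt_reg_r q); [lra|]. unfold Rdiv. rewrite Rmult_assoc, Rinv_l by lra. lra. }
  set (R1 := Rpower r (1 / alpha)).
  set (rho := R1 * q).
  assert (HR1 : 0 < R1 < r).
  { split. apply Rpower_pos. unfold R1. rewrite <- (Rpower_1 r) at 2 by lra. apply Rpower_lt; try lra.
    apply (Rmult_lt_reg_r alpha); [lra|]. unfold Rdiv. rewrite Rmult_assoc, Rinv_l by lra. lra. }
  assert (Hrho : 0 <= rho < 1).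
  { unfold rho. split. apply Rmult_le_pos; lra.
    replace 1 with (r * q) by (unfold r; field; lra). apply Rmult_lt_compat_r; lra. }
  set (v := fun j : nat => Rpower r (INR (S j) / alpha)).
  set (c := fun j : nat => q ^ j * p).
  assert (Hvc : forall j, v j * c j = (p * R1) * rho ^ j).
  { intros j. unfold v, c, rho, R1. rewrite Rpow_mult_distr, Rpower_pow_gen by lra.
    rewrite S_INR. replace ((INR j + 1) / alpha) with (INR j * (1 / alpha) + 1 / alpha) by (field; lra).
    rewrite Rpower_plus. ring. }
  assert (Hv : forall j, 0 < v j) by (intros; apply Rpower_pos).
  assert (Hc : forall j, 0 < c j) by (intros; unfold c; apply Rmult_lt_0_compat; [apply pow_lt|]; lra).
  set (bb := fun (j : nat) (s : R) => ((cos (s * v j) * c j, sin (s * v j) * c j) : C)).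
  set (bb' := fun (j : nat) (s : R) => ((- sin (s * v j) * v j * c j, cos (s * v j) * v j * c j) : C)).
  assert (Hd : forall j s, is_derive (bb j) s (bb' j s)).
  { intros j s. unfold bb, bb'. apply is_derive_pair; auto_derive; auto; ring. }
  assert (Hbb : forall j s, Cmod (bb j s) <= 2 * p * q ^ j).
  { intros j s. eapply Rle_trans. apply Cmod_le_sum. unfold bb; cbn [fst snd].
    pose proof (Hc j). rewrite !Rabs_mult, (Rabs_pos_eq (c j)) by lra.
    pose proof (COS_bound (s * v j)). pose proof (SIN_bound (s * v j)).
    assert (Rabs (cos (s * v j)) <= 1) by (apply Rabs_le; lra).
    assert (Rabs (sin (s * v j)) <= 1) by (apply Rabs_le; lra).
    unfold c in *. nra. }
  assert (Hbb' : forall j s, Cmod (bb' j s) <= (2 * p * R1) * rho ^ j).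
  { intros j s. eapply Rle_trans. apply Cmod_le_sum. unfold bb'; cbn [fst snd].
    pose proof (Hc j). pose proof (Hv j).
    rewrite !Rabs_mult, Rabs_Ropp, (Rabs_pos_eq (c j)), (Rabs_pos_eq (v j)) by lra.
    pose proof (COS_bound (s * v j)). pose proof (SIN_bound (s * v j)).
    assert (Rabs (cos (s * v j)) <= 1) by (apply Rabs_le; lra).
    assert (Rabs (sin (s * v j)) <= 1) by (apply Rabs_le; lra).
    replace (2 * p * R1 * rho ^ j) with (2 * (v j * c j)) by (rewrite Hvc; ring).
    assert (0 < v j * c j) by (apply Rmult_lt_0_compat; lra). nra. }
  set (F := fun s => CSeries (fun j => bb j s)).
  assert (HF : forall s, is_derive F s (CSeries (fun j => bb' j s))).
  { intros s. apply Cseries_derive; auto.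
    { intros y. exists (fun j => (2 * p) * q ^ j). split.
      { apply geom_series; lra. }
      intros j. apply Hbb. }
    intros Rr _. exists (fun j => (2 * p * R1) * rho ^ j). split.
    { apply geom_series; lra. }
    intros j y _. apply Hbb'. }
  destruct (geom_series (2 * p * R1) rho Hrho) as [G1 G2].
  assert (HFb : forall s, Cmod (CSeries (fun j => bb' j s)) <= 2 * (2 * p * R1 / (1 - rho))).
  { intros s. rewrite <- G2. apply CSeries_bound; auto. }
  exists (2 * (2 * p * R1 / (1 - rho))). split.
  { apply Rmult_lt_0_compat; [lra|]. apply Rdiv_lt_0_compat; [|lra].
    apply Rmult_lt_0_compat; lra. }
  intros n t Hn _.
  set (N := Rpower (INR n) (1 / alpha)).
  assert (HN : 0 < N) by apply Rpower_pos.
  assert (Hn0 : 0 < INR n) by (apply lt_0_INR; lia).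
  set (D := CSeries (fun j => bb' j (t / N))).
  exists ((fst D / N * INR n, snd D / N * INR n) : C). split.
  { eapply is_derive_ext.
    { intros y. symmetry. instantiate (1 := fun y => (((fst (F (y / N)) - 1) * INR n, (snd (F (y / N))) * INR n) : C)).
      unfold x_n, f_ap. cbv zeta. fold q r N.
      assert (E : CSeries (fun j => (Cexpi (y / N * Rpower r (INR (S j) / alpha)) * RtoC (q ^ j * p))%C)
                  = F (y / N)).
      { unfold F. apply CSeries_ext. intros j. unfold bb, Cexpi, Cmult, RtoC, v, c. simpl.
        apply injective_projections; simpl; ring. }
      rewrite E. unfold Cmult, Cminus, Cplus, Copp, RtoC. simpl.
      apply injective_projections; simpl; ring. }
    apply is_derive_pair.
    { apply (deriv_comp_lin (fun x => fst (F x) - 1) (fun x => fst (CSeries (fun j => bb' j x)))).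
      { intros y. pose proof (is_derive_minus (fun x => fst (F x)) (fun _ => 1) y _ _
              (is_derive_fst F _ _ (HF y)) (is_derive_const 1 y)) as H.
        replace (fst (CSeries (fun j => bb' j y))) with (minus (fst (CSeries (fun j => bb' j y))) zero)
          by (unfold minus, zero, opp, plus; simpl; ring).
        eapply is_derive_ext. 2: exact H. intros; reflexivity. }
      lra. }
    apply (deriv_comp_lin (fun x => snd (F x)) (fun x => snd (CSeries (fun j => bb' j x)))).
    { intros y. apply (is_derive_snd F), HF. }
    lra. }
  assert (ED : ((fst D / N * INR n, snd D / N * INR n) : C) = Cmult (RtoC (INR n / N)) D).
  { unfold Cmult, RtoC. apply injective_projections; simpl; field; lra. }
  rewrite ED, Cmod_mult, Cmod_R, Rabs_pos_eq by (apply Rdiv_le_0_compat; lra).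
  assert (EN : INR n / N = Rpower (INR n) ((alpha - 1) / alpha)).
  { replace ((alpha - 1) / alpha) with (1 + - (1 / alpha)) by (field; lra).
    rewrite Rpower_plus, Rpower_Ropp, Rpower_1 by lra. reflexivity. }
  rewrite EN. rewrite Rmult_comm. apply Rmult_le_compat_r. left; apply Rpower_pos.
  apply HFb.
Qed.

Theorem lemma11 :
  (* (i) *)
  (forall (k : nat) (alpha p : R),
     (2 <= k)%nat -> 1 < alpha < 2 -> 0 < p < 1 ->
     exists C5k : R, 0 < C5k /\
       forall (n : nat) (t : R), (1 <= n)%nat ->
         exists d : C, is_derive (R_n1k alpha p n k) t d /\
           Cmod d <= C5k * Rabs t ^ (k - 1) / Rpower (INR n) ((INR k - alpha) / alpha))
  /\
  (* (ii) *)
  (forall (alpha p C2 : R),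
     1 < alpha < 2 -> 0 < p < 1 -> 0 < C2 ->
     (forall (n : nat) (t : R), (1 <= n)%nat ->
        Rabs t <= C2 * Rpower (INR n) (1 / alpha) ->
        Cmod (x_n alpha p n t) / INR n <= 1 / 2) ->
     exists C5 : R, 0 < C5 /\
       forall (n : nat) (t : R), (1 <= n)%nat ->
         Rabs t <= C2 * Rpower (INR n) (1 / alpha) ->
         exists d : C, is_derive (x_n alpha p n) t d /\
           Cmod d <= C5 * Rpower (INR n) ((alpha - 1) / alpha)).
Proof. split; [apply part1 | apply part2]. Qed.
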